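(* Let $(A,d)$ be a $\mathbb{Z}/2$-graded $\Lambda$-algebra (not necessarily associative or commutative) with a differential $d$ satisfying the graded Leibniz rule, equipped with a map $\operatorname{val}:A\to\mathbb{R}\cup\{+\infty\}$ such that $\operatorname{val}^{-1}(+\infty)=\{0\}$ and for all $c\in\Lambda$, $x,y\in A$: $\operatorname{val}(x\cdot y)\ge\operatorname{val}(x)+\operatorname{val}(y)$, $\operatorname{val}(dx)\ge\operatorname{val}(x)$, $\operatorname{val}(cx)=\operatorname{val}(c)+\operatorname{val}(x)$, $\operatorname{val}(x+y)\ge\min\{\operatorname{val}(x),\operatorname{val}(y)\}$; assume $A$ is complete with respect to the norm $e^{-\operatorname{val}}$. Let $a,b\in H(A)$ satisfy $ba=\lambda a$ for some nonzero $\lambda\in\Lambda$, and assume $b$ has a representative of valuation strictly larger than $\operatorname{val}(\lambda)$. Then $a=0$.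
   Context: $\Lambda$ is the Novikov field of series $\sum_{i\ge0}a_iT^{\lambda_i}$, $a_i\in\mathbb{Q}$, $\lambda_i\in\mathbb{R}$ strictly increasing to $+\infty$, with valuation $\operatorname{val}$. $H(A)$ denotes the cohomology of $(A,d)$ with its induced product. *)

(* Defs.v *)
From HB Require Import structures.
From mathcomp Require Import all_boot all_order all_algebra.
From mathcomp Require Import boolp classical_sets functions cardinality fsbigop.
From mathcomp Require Import reals constructive_ereal ereal Rstruct.
Set Implicit Arguments. Unset Strict Implicit. Unset Printing Implicit Defensive.
Import Order.TTheory GRing.Theory Num.Theory.
Local Open Scope classical_set_scope.
Local Open Scope ring_scope.

Notation RR := Rdefinitions.R.

(* The (universal) Novikov field Lambda over Q.                         *)
(* A series  sum_i a_i T^{lambda_i}  (a_i in Q, lambda_i strictly       *)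
(* increasing to +oo) is represented by its coefficient function        *)
(* f : R -> Q, f(r) = coefficient of T^r; such functions are exactly    *)
(* those whose support meets every half-line (-oo, C] in a finite set.  *)
Definition nov := RR -> rat.

Definition nov_supp (f : nov) : set RR := [set r | f r != 0].

Definition is_nov (f : nov) : Prop :=
  forall C : RR, finite_set [set r | r <= C /\ f r != 0].

Definition nov0 : nov := fun _ => 0.
Definition nov1 : nov := fun r => if r == 0 then 1 else 0.
Definition nov_add (f g : nov) : nov := fun r => f r + g r.
(* Cauchy product: (f g)(r) = sum_{s + t = r} f(s) g(t)  (a finite sum
   for Novikov series). *)
Definition nov_mul (f g : nov) : nov :=
  fun r => \sum_(s \in nov_supp f) f s * g (r - s).

Definition nov_val (f : nov) : \bar RR :=
  ereal_inf [set (r%:E) | r in nov_supp f].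

(*   gr i x : x is homogeneous of degree i in Z/2 (false = even)        *)
Record valued_dga (A : zmodType) (sc : nov -> A -> A) (mul : A -> A -> A)
    (d : A -> A) (gr : bool -> A -> Prop) (val : A -> \bar RR) : Prop := {
  sc_addr : forall c x y, is_nov c -> sc c (x + y) = sc c x + sc c y;
  sc_addl : forall c c' x, is_nov c -> is_nov c' ->
              sc (nov_add c c') x = sc c x + sc c' x;
  sc_mul : forall c c' x, is_nov c -> is_nov c' ->
              sc (nov_mul c c') x = sc c (sc c' x);
  sc_one : forall x, sc nov1 x = x;
  mul_addl : forall x y z, mul (x + y) z = mul x z + mul y z;
  mul_addr : forall x y z, mul x (y + z) = mul x y + mul x z;
  mul_scl : forall c x y, is_nov c -> mul (sc c x) y = sc c (mul x y);
  mul_scr : forall c x y, is_nov c -> mul x (sc c y) = sc c (mul x y);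
  (* Z/2-grading: A = A_0 (+) A_1 as Lambda-modules, A_i A_j in A_{i+j} *)
  gr_zero : forall i, gr i 0;
  gr_add : forall i x y, gr i x -> gr i y -> gr i (x + y);
  gr_sc : forall i c x, is_nov c -> gr i x -> gr i (sc c x);
  gr_span : forall x, exists x0 x1, gr false x0 /\ gr true x1 /\ x = x0 + x1;
  gr_direct : forall x, gr false x -> gr true x -> x = 0;
  gr_mul : forall i j x y, gr i x -> gr j y -> gr (addb i j) (mul x y);
  d_add : forall x y, d (x + y) = d x + d y;
  d_sc : forall c x, is_nov c -> d (sc c x) = sc c (d x);
  d_gr : forall i x, gr i x -> gr (~~ i) (d x);
  d_d : forall x, d (d x) = 0;
  d_leibniz : forall i x y, gr i x ->
      d (mul x y) = mul (d x) y + (if i then - mul x (d y) else mul x (d y));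
  val_ninfty : forall x, val x != -oo%E;
  val_pinfty : forall x, val x = +oo%E <-> x = 0;
  val_mul : forall x y, (val x + val y <= val (mul x y))%E;
  val_d : forall x, (val x <= val (d x))%E;
  val_sc : forall c x, is_nov c -> val (sc c x) = (nov_val c + val x)%E;
  val_add : forall x y, (Order.min (val x) (val y) <= val (x + y)%R)%E;
  val_complete : forall u : nat -> A,
      (forall M : RR, exists N, forall m n, (N <= m)%N -> (N <= n)%N ->
           (M%:E <= val (u m - u n)%R)%E) ->
      exists l : A, forall M : RR, exists N, forall n, (N <= n)%N ->
           (M%:E <= val (u n - l)%R)%E
}.

(* Cohomology H(A) = ker d / im d, handled through representatives. *)
Definition is_cycle (A : zmodType) (d : A -> A) (x : A) : Prop := d x = 0.
Definition is_exact (A : zmodType) (d : A -> A) (x : A) : Prop :=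
  exists y, x = d y.

(* Main.v *)
Require Import Defs.
From HB Require Import structures.
From mathcomp Require Import all_boot all_order all_algebra.
From mathcomp Require Import boolp classical_sets functions cardinality fsbigop.
From mathcomp Require Import reals constructive_ereal ereal Rstruct.
From mathcomp Require Import lra.
Import Order.TTheory GRing.Theory Num.Theory.
Local Open Scope classical_set_scope.
Local Open Scope ring_scope.


Lemma seq_gap (s : seq RR) (a : RR) :
  exists b, a < b /\ forall x, x \in s -> a < x -> b <= x.
Proof.
elim: s => [|y s [b [ab Hb]]].
  by exists (a + 1); split => //; lra.
case: (boolP (a < y)) => ay.
  exists (Order.min b y); split; first by rewrite lt_min ab ay.
  move=> x; rewrite inE => /orP [/eqP -> _|xs ax]; first by rewrite ge_min lexx orbT.
  by rewrite ge_min Hb.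
exists b; split => // x; rewrite inE => /orP [/eqP -> ay'|]; first by rewrite ay' in ay.
exact: Hb.
Qed.

Lemma seq_min (s : seq RR) (x0 : RR) : x0 \in s ->
  exists v, v \in s /\ forall x, x \in s -> v <= x.
Proof.
elim: s x0 => [//|y s IH] x0 _.
case: s IH => [|z s] IH.
  by exists y; split; rewrite ?inE ?eqxx // => x; rewrite inE => /eqP ->.
have [v [vs Hv]] := IH z (mem_head _ _).
exists (Order.min y v); split.
  by rewrite /Order.min; case: ifP => _; rewrite inE ?eqxx ?vs ?orbT.
move=> x; rewrite inE => /orP [/eqP ->|xs]; first by rewrite ge_min lexx.
by rewrite ge_min Hv ?orbT.
Qed.

Lemma nov_gap f (Hf : is_nov f) a :
  exists b, a < b /\ forall r, f r != 0 -> a < r -> b <= r.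
Proof.
have /finite_seqP [s Hs] := Hf (a + 1).
have [b [ab Hb]] := seq_gap s a.
exists (Order.min b (a + 1)); split; first by rewrite lt_min ab; lra.
move=> r fr ar; case: (lerP r (a + 1)) => ra.
  have : [set r | r <= a + 1 /\ f r != 0] r by [].
  by rewrite Hs /= => /Hb /(_ ar) br; rewrite ge_min br.
by rewrite ge_min (ltW ra) orbT.
Qed.

Lemma nov_min f (Hf : is_nov f) s0 : f s0 != 0 ->
  exists v, f v != 0 /\ forall r, f r != 0 -> v <= r.
Proof.
move=> fs0.
have /finite_seqP [s Hs] := Hf s0.
have : [set r | r <= s0 /\ f r != 0] s0 by split.
rewrite Hs /= => s0s.
have [v [vs Hv]] := @seq_min s s0 s0s.
have : [set` s] v by [].
rewrite -Hs => -[vs0 fv].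
exists v; split => // r fr; case: (lerP r s0) => rs0.
  apply: Hv; have : [set r | r <= s0 /\ f r != 0] r by split.
  by rewrite Hs.
by apply: le_trans vs0 (ltW rs0).
Qed.


Definition mono (c : rat) (p : RR) : nov := fun r => if r == p then c else 0.

Lemma is_nov_mono c p : is_nov (mono c p).
Proof.
move=> C; apply: (sub_finite_set _ (finite_set1 p)) => r /= [_].
by rewrite /mono; case: (eqVneq r p) => // _; rewrite eqxx.
Qed.

Lemma is_nov_nov0 : is_nov nov0.
Proof. by move=> C; apply: (sub_finite_set _ (finite_set0 _)) => r /= [_] /eqP; rewrite /nov0. Qed.

Lemma nov1_mono : nov1 = mono 1 0.
Proof. by []. Qed.

Lemma is_nov_nov1 : is_nov nov1.
Proof. exact: is_nov_mono. Qed.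

Lemma nov_supp_mono c p : c != 0 -> nov_supp (mono c p) = [set p].
Proof.
move=> c0; apply/seteqP; split => r /=; rewrite /nov_supp /mono /=.
  by case: (eqVneq r p) => // _; rewrite eqxx.
by move=> ->; rewrite eqxx.
Qed.

Lemma nov_mul_mono c p g : c != 0 -> nov_mul (mono c p) g = fun r => c * g (r - p).
Proof.
move=> c0; apply: funext => r; rewrite /nov_mul nov_supp_mono // fsbig_set1.
by rewrite /mono eqxx.
Qed.

Lemma nov_val_ge f a : (forall r, f r != 0 -> a <= r) -> (a%:E <= nov_val f)%E.
Proof.
move=> H; apply: le_ereal_inf_tmp => _ [r /= fr <-].
by rewrite lee_fin; apply: H.
Qed.

Lemma nov_val_le f r : f r != 0 -> (nov_val f <= r%:E)%E.
Proof.
by move=> fr; apply: ereal_inf_lbound; exists r.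
Qed.

Lemma is_nov_shift g c v : is_nov g ->
  is_nov (fun r => c * g (r + v) - nov1 r).
Proof.
move=> Hg C.
apply: (sub_finite_set (B := ((fun s => s - v) @` [set s | s <= C + v /\ g s != 0]) `|` [set 0])).
  move=> r /= [rC].
  case: (boolP (g (r + v) == 0)) => [/eqP ->|grv].
    rewrite mulr0 sub0r oppr_eq0 /nov1 => H; right.
    by case: (eqVneq r 0) H => // _; rewrite eqxx.
  move=> _; left; exists (r + v); last by rewrite addrK.
  by split => //; lra.
rewrite finite_setU; split; last exact: finite_set1.
exact/finite_image/Hg.
Qed.

Definition eta_of (c : rat) (v : RR) (g : nov) : nov := fun r => c * g (r + v) - nov1 r.

Lemma nov_inv_data lam : is_nov lam -> lam <> nov0 ->
  exists v c δ, c != 0 /\ 0 < δ /\ is_nov (eta_of c v lam) /\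
    nov_mul (mono c (-v)) lam = nov_add nov1 (eta_of c v lam) /\
    (δ%:E <= nov_val (eta_of c v lam))%E /\ nov_val lam = v%:E /\
    (nov_val (mono c (- v)%R) < +oo)%E.
Proof.
move=> Hl Hl0.
have [s0 ls0] : exists s0, lam s0 != 0.
  apply/not_existsP => H; apply: Hl0; apply: funext => r.
  by have := H r; rewrite /nov0; case: eqP.
have [v [lv Hv]] := @nov_min lam Hl s0 ls0.
set c := (lam v)^-1.
have c0 : c != 0 by rewrite invr_eq0.
have Heta : is_nov (eta_of c v lam) by apply: is_nov_shift.
have Hpos : forall r, eta_of c v lam r != 0 -> 0 < r.
  move=> r; rewrite /eta_of /nov1; case: (ltrgtP r 0) => // [r0|->].
    have -> : lam (r + v) = 0.
      apply/eqP; apply: contraT => H; have := Hv _ H; lra.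
    by rewrite mulr0 subrr eqxx.
  by rewrite add0r mulVf // eqxx subrr eqxx.
have [δ [δ0 Hδ]] := @nov_gap _ Heta 0.
exists v, c, δ; (do !split) => //.
- rewrite nov_mul_mono //; apply: funext => r.
  by rewrite /nov_add /eta_of opprK addrCA subrr addr0.
- apply: nov_val_ge => r er; exact: Hδ er (Hpos _ er).
- apply/eqP; rewrite eq_le; apply/andP; split; first exact: nov_val_le.
  exact: nov_val_ge.
- apply: (le_lt_trans (nov_val_le (mono c (-v)) (-v) _)); last exact: ltry.
  by rewrite /mono eqxx.
Qed.


Lemma self_add0 (V : zmodType) (a : V) : a = a + a -> a = 0.
Proof. by move=> H; apply/(@addrI _ a); rewrite addr0 -H. Qed.

Section Alg.
Variables (A : zmodType) (sc : nov -> A -> A) (mul : A -> A -> A)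
    (d : A -> A) (gr : bool -> A -> Prop) (val : A -> \bar RR).
Hypothesis HA : valued_dga sc mul d gr val.

Lemma sc_nov0 x : sc nov0 x = 0.
Proof.
have := Defs.sc_addl HA x is_nov_nov0 is_nov_nov0.
have -> : nov_add nov0 nov0 = nov0 by apply: funext => r; rewrite /nov_add addr0.
exact: self_add0.
Qed.


Lemma sc_c0 c : is_nov c -> sc c 0 = 0.
Proof.
move=> Hc; have := Defs.sc_addr HA 0 0 Hc; rewrite addr0; exact: self_add0.
Qed.

Lemma scN c x : is_nov c -> sc c (- x) = - sc c x.
Proof.
by move=> Hc; apply/eqP; rewrite -addr_eq0 -(Defs.sc_addr HA) // addNr sc_c0.
Qed.

Lemma scB c x y : is_nov c -> sc c (x - y) = sc c x - sc c y.
Proof. by move=> Hc; rewrite (Defs.sc_addr HA) // scN. Qed.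

Definition neg1 : nov := mono (-1) 0.

Lemma sc_neg1 x : sc neg1 x = - x.
Proof.
have := Defs.sc_addl HA x is_nov_nov1 (is_nov_mono (-1) 0).
have -> : nov_add nov1 (mono (-1) 0) = nov0.
  by apply: funext => r; rewrite /nov_add /nov1 /mono /nov0; case: (r == 0) => //; rewrite subrr.
rewrite sc_nov0 (Defs.sc_one HA) => H.
by apply/eqP; rewrite -addr_eq0 addrC /neg1 -H.
Qed.

Lemma gr_opp i x : gr i x -> gr i (- x).
Proof. by move=> H; rewrite -sc_neg1; apply: (Defs.gr_sc HA) => //; exact: is_nov_mono. Qed.

Lemma val_opp_ge x : (val x <= val (- x))%E.
Proof.
rewrite -sc_neg1 (Defs.val_sc HA) //; last exact: is_nov_mono.
rewrite -{1}(add0e (val x)); apply: leeD => //.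
apply: nov_val_ge => r; rewrite /neg1 /mono.
by case: (eqVneq r 0) => [->|]; rewrite ?eqxx.
Qed.

Lemma val_opp x : val (- x) = val x.
Proof.
apply/eqP; rewrite eq_le val_opp_ge andbT.
by rewrite -{2}(opprK x) val_opp_ge.
Qed.

Lemma mul0l y : mul 0 y = 0.
Proof.
have := Defs.mul_addl HA 0 0 y; rewrite addr0; exact: self_add0.
Qed.

Lemma mul0r y : mul y 0 = 0.
Proof.
have := Defs.mul_addr HA y 0 0; rewrite addr0; exact: self_add0.
Qed.

Lemma mulNl x y : mul (- x) y = - mul x y.
Proof.
by apply/eqP; rewrite -addr_eq0 -(Defs.mul_addl HA) addNr mul0l.
Qed.

Lemma mulNr x y : mul y (- x) = - mul y x.
Proof.
by apply/eqP; rewrite -addr_eq0 -(Defs.mul_addr HA) addNr mul0r.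
Qed.

Lemma d0 : d 0 = 0.
Proof.
have := Defs.d_add HA 0 0; rewrite addr0; exact: self_add0.
Qed.

Lemma dN x : d (- x) = - d x.
Proof.
by apply/eqP; rewrite -addr_eq0 -(Defs.d_add HA) addNr d0.
Qed.

Lemma val_inf_eq0 x : val x = +oo%E -> x = 0.
Proof. by move/(Defs.val_pinfty HA x). Qed.

Lemma val_all_eq0 x : (forall M : RR, (M%:E <= val x)%E) -> x = 0.
Proof.
move=> H; apply: val_inf_eq0.
move: H (Defs.val_ninfty HA x); case: (val x) => // r Hr _.
by have := Hr (r + 1); rewrite lee_fin => H; exfalso; lra.
Qed.

Lemma val_lb x : exists M : RR, (M%:E <= val x)%E.
Proof.
have := Defs.val_ninfty HA x; case: (val x) => [r _|_|//].
  by exists r.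
by exists 0; rewrite leey.
Qed.

Lemma val_add_ge K x y : (K <= val x)%E -> (K <= val y)%E -> (K <= val (x + y))%E.
Proof.
move=> Hx Hy; apply: le_trans (Defs.val_add HA x y).
by rewrite le_min Hx Hy.
Qed.


Lemma gspan' x : exists x0, gr false x0 /\ gr true (x - x0).
Proof.
have [x0 [x1 [H0 [H1 ->]]]] := Defs.gr_span HA x.
by exists x0; split => //; rewrite addrAC subrr add0r.
Qed.

Definition p0 : A -> A := projT1 (choice gspan').

Lemma p0P x : gr false (p0 x) /\ gr true (x - p0 x).
Proof. exact: (projT2 (choice gspan') x). Qed.

Definition G x := p0 x - (x - p0 x).

Lemma p0uniq a0 a1 : gr false a0 -> gr true a1 -> p0 (a0 + a1) = a0.
Proof.
move=> H0 H1; have [P0 P1] := p0P (a0 + a1).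
apply/eqP; rewrite -subr_eq0; apply/eqP; apply: (Defs.gr_direct HA).
  by apply: (Defs.gr_add HA) => //; apply: gr_opp.
have -> : p0 (a0 + a1) - a0 = a1 - (a0 + a1 - p0 (a0 + a1)).
  by rewrite opprB addrCA [a0 + a1]addrC opprD addNKr.
by apply: (Defs.gr_add HA) => //; apply: gr_opp.
Qed.

Lemma GE a0 a1 : gr false a0 -> gr true a1 -> G (a0 + a1) = a0 - a1.
Proof. by move=> H0 H1; rewrite /G p0uniq // addrAC subrr add0r. Qed.

Lemma decomp x : x = p0 x + (x - p0 x).
Proof. by rewrite addrC subrK. Qed.

Lemma G_add x y : G (x + y) = G x + G y.
Proof.
have [x0 x1] := p0P x; have [y0 y1] := p0P y.
rewrite {1}(decomp x) {1}(decomp y).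
set a := p0 x; set b := x - p0 x; set c := p0 y; set e := y - p0 y.
have -> : a + b + (c + e) = (a + c) + (b + e).
  by rewrite addrACA.
rewrite GE; last by apply: (Defs.gr_add HA).
  by rewrite /G -/a -/b -/c -/e opprD addrACA.
by apply: (Defs.gr_add HA).
Qed.

Lemma G0 : G 0 = 0.
Proof. by have := G_add 0 0; rewrite addr0; exact: self_add0. Qed.

Lemma G_N x : G (- x) = - G x.
Proof. by apply/eqP; rewrite -addr_eq0 -G_add addNr G0. Qed.

Lemma G_G x : G (G x) = x.
Proof.
have [x0 x1] := p0P x.
rewrite {2}/G GE; last exact: gr_opp.
  by rewrite opprK addrC subrK.
by [].
Qed.

Lemma G_sc c x : is_nov c -> G (sc c x) = sc c (G x).
Proof.
move=> Hc; have [x0 x1] := p0P x.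
rewrite {1}(decomp x) (Defs.sc_addr HA) // GE.
- by rewrite /G !scB.
- exact: (Defs.gr_sc HA).
- exact: (Defs.gr_sc HA).
Qed.

Lemma G_mul_hom a b c e : gr false a -> gr true b -> gr false c -> gr true e ->
  G (mul (a + b) (c + e)) = mul (a - b) (c - e).
Proof.
move=> Ha Hb Hc He.
rewrite (Defs.mul_addl HA) !(Defs.mul_addr HA).
have -> : mul a c + mul a e + (mul b c + mul b e) =
   (mul a c + mul b e) + (mul a e + mul b c).
  by rewrite !addrA -[_ + mul b c + _]addrA [mul b c + _]addrC addrA -[mul a c + mul a e + mul b e]addrA [mul a e + _]addrC addrA.
rewrite GE.
- rewrite !(Defs.mul_addl HA) !mulNl !mulNr opprK opprD [- mul a e - _]addrC addrACA [mul b e - _]addrC.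
  by [].
- by apply: (Defs.gr_add HA); [exact: (Defs.gr_mul HA Ha Hc)|exact: (Defs.gr_mul HA Hb He)].
- by apply: (Defs.gr_add HA); [exact: (Defs.gr_mul HA Ha He)|exact: (Defs.gr_mul HA Hb Hc)].
Qed.

Lemma G_mul x y : G (mul x y) = mul (G x) (G y).
Proof.
have [x0 x1] := p0P x; have [y0 y1] := p0P y.
by rewrite {1}(decomp x) {1}(decomp y) G_mul_hom.
Qed.

Lemma G_d_hom a b : gr false a -> gr true b -> d (a - b) = - G (d (a + b)).
Proof.
move=> Ha Hb.
have H0 := Defs.d_gr HA Ha; have H1 := Defs.d_gr HA Hb.
by rewrite [d (a + b)](Defs.d_add HA) [d a + _]addrC GE // opprB (Defs.d_add HA) dN.
Qed.

Lemma G_d x : d (G x) = - G (d x).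
Proof.
have [x0 x1] := p0P x.
by rewrite {2}(decomp x) -G_d_hom.
Qed.

Lemma leib_hom a b y : gr false a -> gr true b ->
  d (mul (a + b) y) = mul (d (a + b)) y + mul (a - b) (d y).
Proof.
move=> Ha Hb.
rewrite (Defs.mul_addl HA) (Defs.d_add HA).
rewrite (Defs.d_leibniz HA _ Ha) (Defs.d_leibniz HA _ Hb) /=.
rewrite (Defs.d_add HA) (Defs.mul_addl HA) (Defs.mul_addl HA) mulNl.
by rewrite addrACA.
Qed.

Lemma leibniz x y : d (mul x y) = mul (d x) y + mul (G x) (d y).
Proof.
have [x0 x1] := p0P x.
by rewrite {1}(decomp x) leib_hom // -decomp.
Qed.


Lemma archi_nat (x : RR) : exists N : nat, x < N%:R.
Proof.
exists (Num.bound (Order.max x 0)).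
apply: le_lt_trans (archi_boundP _); first by rewrite le_max lexx.
by rewrite le_max lexx orbT.
Qed.

Lemma fixpt (H : A -> A) (δ : RR) : 0 < δ ->
  (forall x y, H (x + y) = H x + H y) ->
  (forall (M : RR) x, (M%:E <= val x)%E -> ((M + δ)%:E <= val (H x))%E) ->
  forall y, exists x, x = y + H x.
Proof.
move=> δ0 Hadd Hc y.
have H0 : H 0 = 0 by have := Hadd 0 0; rewrite addr0; exact: self_add0.
have HN : forall x, H (- x) = - H x.
  by move=> x; apply/eqP; rewrite -addr_eq0 -Hadd addNr H0.
have HB : forall x z, H (x - z) = H x - H z by move=> x z; rewrite Hadd HN.
pose u := fix u n := if n is n'.+1 then y + H (u n') else 0.
have [M0 HM0] := val_lb y.
have Hstep : forall n, ((M0 + n%:R * δ)%:E <= val (u n.+1 - u n))%E.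
  elim => [|n IH].
    by rewrite /= GRing.mul0r addr0 H0 addr0 subr0.
  have -> : u n.+2 - u n.+1 = H (u n.+1 - u n).
    by rewrite /= HB opprD addrACA subrr add0r.
  apply: le_trans (Hc _ _ IH).
  by rewrite lee_fin -natr1 mulrDl GRing.mul1r addrA.
have Hcau : forall n k, ((M0 + n%:R * δ)%:E <= val (u (k + n)%N - u n))%E.
  move=> n; elim => [|k IH]; first by rewrite add0n subrr (val_pinfty HA 0).2 // leey.
  have -> : u (k.+1 + n)%N - u n = (u (k + n).+1 - u (k + n)%N) + (u (k + n)%N - u n).
    by rewrite addSn addrA subrK.
  apply: val_add_ge => //; apply: le_trans (Hstep _); rewrite lee_fin lerD2l.
  by rewrite ler_wpM2r ?(ltW δ0) // ler_nat leq_addl.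
have Hcau2 : forall m n, (n <= m)%N -> ((M0 + n%:R * δ)%:E <= val (u m - u n))%E.
  by move=> m n nm; rewrite -(subnK nm); exact: Hcau.
have [l Hl] : exists l : A, forall M : RR, exists N, forall n, (N <= n)%N ->
           (M%:E <= val (u n - l)%R)%E.
  apply: (Defs.val_complete HA) => M.
  have [N HN'] := archi_nat ((M - M0) / δ).
  have HMN : M <= M0 + N%:R * δ.
    by rewrite -lerBlDl -ler_pdivrMr // ltW.
  exists N => m n Nm Nn.
  case: (leqP n m) => nm.
    apply: le_trans (Hcau2 _ _ nm); rewrite lee_fin (le_trans HMN) // lerD2l.
    by rewrite ler_wpM2r ?(ltW δ0) // ler_nat.
  rewrite -val_opp opprB.
  apply: le_trans (Hcau2 _ _ (ltnW nm)); rewrite lee_fin (le_trans HMN) // lerD2l.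
  by rewrite ler_wpM2r ?(ltW δ0) // ler_nat.
exists l; apply/eqP; rewrite -subr_eq0; apply/eqP; apply: val_all_eq0 => M.
have [N1 HN1] := Hl M; have [N2 HN2] := Hl (M - δ).
pose n := maxn N1 N2.
have -> : l - (y + H l) = - (u n.+1 - l) + H (u n - l).
  by rewrite HB /= opprB !opprD !addrA subrK.
apply: val_add_ge.
  by rewrite val_opp; apply: HN1; rewrite leqW // leq_maxl.
have := Hc _ _ (HN2 n (leq_maxr _ _)); by rewrite subrK.
Qed.


Lemma sc_inj c : is_nov c -> (nov_val c < +oo)%E -> forall w, sc c w = 0 -> w = 0.
Proof.
move=> Hc Hlt w Hw; apply: val_inf_eq0.
have := Defs.val_sc HA w Hc; rewrite Hw (proj2 (Defs.val_pinfty HA 0)) //.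
move: Hlt (Defs.val_ninfty HA w).
by case: (nov_val c) => [r| |]; case: (val w) => [s| |].
Qed.

Lemma sc_lam_inv lam : is_nov lam -> lam <> nov0 ->
  exists v : RR, nov_val lam = v%:E /\ forall y, exists x, sc lam x = y.
Proof.
move=> Hl Hl0.
have [v [c [δ [c0 [δ0 [Heta [Hmul [Hδ [Hv Hm]]]]]]]]] := nov_inv_data lam Hl Hl0.
exists v; split => // y.
set eta := eta_of c v lam in Heta Hmul Hδ.
set m := mono c (- v) in Hmul Hm.
have Hmn : is_nov m by exact: is_nov_mono.
have [z Hz] : exists z, z = sc m y + (- sc eta z).
  apply: (@fixpt (fun z => - sc eta z) δ) => //.
    by move=> a b; rewrite (Defs.sc_addr HA) // opprD.
  move=> M x HM; rewrite val_opp (Defs.val_sc HA) // EFinD addrC.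
  exact: leeD.
exists z.
have E : sc m (sc lam z) = sc m y.
  rewrite -(Defs.sc_mul HA) // Hmul (Defs.sc_addl HA) //; last exact: is_nov_nov1.
  by rewrite (Defs.sc_one HA) {1}Hz subrK.
apply/eqP; rewrite -subr_eq0; apply/eqP; apply: (@sc_inj m Hmn Hm).
by rewrite scB // E subrr.
Qed.


Lemma main_lemma (alpha beta : A) (Halpha : is_cycle d alpha) (Hbeta : is_cycle d beta)
    (lam : nov) (Hlam : is_nov lam) (Hlam0 : lam <> nov0)
    (Hba : is_exact d (mul beta alpha - sc lam alpha))
    (Hval : (nov_val lam < val beta)%E) :
  is_exact d alpha.
Proof.
have [v [Hv Hsurj]] := sc_lam_inv lam Hlam Hlam0.
pose inv := projT1 (choice Hsurj).
have invP : forall y, sc lam (inv y) = y := projT2 (choice Hsurj).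
have Hinj : forall w, sc lam w = 0 -> w = 0.
  by apply: sc_inj => //; rewrite Hv ltry.
have inv_eq : forall x y, sc lam x = y -> inv y = x.
  move=> x y Hxy; apply/eqP; rewrite -subr_eq0; apply/eqP; apply: Hinj.
  by rewrite scB // invP Hxy subrr.
have inv_add : forall a b, inv (a + b) = inv a + inv b.
  by move=> a b; apply: inv_eq; rewrite (Defs.sc_addr HA) // !invP.
have inv0 : inv 0 = 0 by apply: inv_eq; rewrite sc_c0.
have inv_G : forall z, inv (G z) = G (inv z).
  by move=> z; apply: inv_eq; rewrite -G_sc // invP.
have inv_d : forall z, inv (d z) = d (inv z).
  by move=> z; apply: inv_eq; rewrite -(Defs.d_sc HA) // invP.
have val_inv : forall z, val z = (v%:E + val (inv z))%E.
  by move=> z; rewrite -{1}(invP z) (Defs.val_sc HA) // Hv.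
pose L y := inv (mul beta y).
pose L' y := inv (mul (G beta) y).
have L_add : forall a b, L (a + b) = L a + L b.
  by move=> a b; rewrite /L (Defs.mul_addr HA) inv_add.
have L'_add : forall a b, L' (a + b) = L' a + L' b.
  by move=> a b; rewrite /L' (Defs.mul_addr HA) inv_add.
have L'_N : forall a, L' (- a) = - L' a.
  by move=> a; apply/eqP; rewrite -addr_eq0 -L'_add addNr /L' mul0r inv0.
have [δ [δ0 Hcontr]] : exists δ : RR, 0 < δ /\
    forall (M : RR) y, (M%:E <= val y)%E -> ((M + δ)%:E <= val (L y))%E.
  move: Hval; rewrite Hv.
  have := Defs.val_ninfty HA beta.
  case Eb: (val beta) => [b| |] // _.
    rewrite lte_fin => vb; exists (b - v); split; first by rewrite subr_gt0.
    move=> M y HM.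
    have H1 := Defs.val_mul HA beta y; rewrite Eb (val_inv (mul beta y)) in H1.
    have H2 : ((b + M)%:E <= v%:E + val (L y))%E.
      apply: (le_trans _ H1); rewrite EFinD; exact: leeD.
    move: H2 (Defs.val_ninfty HA (L y)); rewrite /L.
    case: (val (inv (mul beta y))) => [r| |] //; last by move=> *; rewrite leey.
    by rewrite -EFinD !lee_fin => H _; lra.
  move=> _; exists 1; split => // M y HM.
  have H1 := Defs.val_mul HA beta y; rewrite Eb in H1.
  have : mul beta y = 0.
    apply: val_inf_eq0; apply/eqP; rewrite eq_le leey /=.
    apply: (le_trans _ H1); move: HM (Defs.val_ninfty HA y).
    by case: (val y).
  by rewrite /L => ->; rewrite inv0 (proj2 (Defs.val_pinfty HA 0)) // leey.
have dbeta : d beta = 0 := Hbeta.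
have dL : forall w, d (L w) = L' (d w).
  by move=> w; rewrite /L /L' -inv_d leibniz dbeta mul0l add0r.
have GL : forall y, G (L y) = L' (G y).
  by move=> y; rewrite /L /L' -inv_G G_mul.
have GL' : forall y, G (L' y) = L (G y).
  by move=> y; rewrite /L /L' -inv_G G_mul G_G.
have [g Hg] := Hba.
have HLa : L alpha = alpha + d (inv g).
  rewrite /L -inv_d.
  have -> : mul beta alpha = sc lam alpha + d g by rewrite -Hg addrC subrK.
  by rewrite inv_add; congr (_ + _); apply: inv_eq.
set a := G alpha; set t := G (inv g).
have HL'a : L' a = a - d t.
  by rewrite /a -GL HLa G_add -[G (d _)]opprK -G_d.
have [W HW] := @fixpt L δ δ0 L_add Hcontr t.
set R := a - d W.
have HR : L' R = R.
  rewrite /R L'_add L'_N -dL HL'a -addrA; congr (_ + _).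
  by rewrite -opprD -(Defs.d_add HA) -HW.
have HGR : L (G R) = G R by rewrite -GL' HR.
have GR0 : G R = 0.
  apply: val_inf_eq0.
  have H' : forall M : RR, (M%:E <= val (G R))%E -> ((M + δ)%:E <= val (G R))%E.
    by move=> M HM; rewrite -HGR; apply: Hcontr.
  move: H' (Defs.val_ninfty HA (G R)).
  case: (val (G R)) => [r| |] // /(_ r (lexx _)) H _.
  by move: H; rewrite lee_fin gerDl leNgt δ0.
have R0 : R = 0 by rewrite -(G_G R) GR0 G0.
exists (- G W); rewrite dN G_d opprK.
have -> : d W = a by apply/eqP; rewrite eq_sym -subr_eq0 -/R R0.
by rewrite /a G_G.
Qed.

End Alg.
Local Close Scope classical_set_scope.

(* a = [alpha], b = [beta] in H(A) with beta a representative of b of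
   valuation > val(lam);  b a = lam a  means  beta*alpha - lam*alpha is
   exact;  conclusion a = 0 means alpha is exact. *)
Theorem lemma3p2 (A : zmodType) (sc : nov -> A -> A) (mul : A -> A -> A)
    (d : A -> A) (gr : bool -> A -> Prop) (val : A -> \bar RR)
    (HA : valued_dga sc mul d gr val)
    (alpha beta : A) (Halpha : is_cycle d alpha) (Hbeta : is_cycle d beta)
    (lam : nov) (Hlam : is_nov lam) (Hlam0 : lam <> nov0)
    (Hba : is_exact d (mul beta alpha - sc lam alpha))
    (Hval : (nov_val lam < val beta)%E) :
  is_exact d alpha.
Proof.
exact: (@main_lemma A sc mul d gr val HA alpha beta Halpha Hbeta lam Hlam Hlam0 Hba Hval).
Qed.
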